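(* Let $s = s[1..n]$ be a string over a finite alphabet. The LZ77 parse of $s$ (as defined in the context) can be computed by a deterministic algorithm that has read-only random access to $s$, writes its output to a write-only output, and uses $O(\log n)$ bits of workspace.
   Context: The LZ77 parse considered here is the greedy, non-self-referencing variant. It partitions $s$ into consecutive phrases, left to right. The first phrase is the single character $s[1]$. Let $t$ be the position just after the already-parsed prefix $s[1..t-1]$, with $t \le n$. For each $1 \le i < t$, let $L_i$ be the length of the longest common prefix of $s[i..t-1]$ and $s[t..n]$; let $L = \max_i L_i$, and let $i^*$ be the minimal $i$ attaining $L$. If $L \le 1$, the next phrase is the single character $s[t]$, output as that character. Otherwise the next phrase is $s[t..t+L-1]$, output as the pair $(i^*, L)$. Each phrase is thus either a single character or a copy of a substring of the prefix already parsed. *)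

(* Defs.v *)
From mathcomp Require Import all_boot.
Set Implicit Arguments. Unset Strict Implicit. Unset Printing Implicit Defensive.

(** * LZ77 parse (greedy, non-self-referencing), positions are 1-based *)

Section LZ77.
Variable A : finType.

Inductive phrase := Char of A | Copy of nat & nat. (* Copy i L = pair (i*, L) *)

Fixpoint lcp (u v : seq A) : nat :=
  match u, v with
  | a :: u', b :: v' => if a == b then (lcp u' v').+1 else 0
  | _, _ => 0
  end.

Definition Lat (s : seq A) (t i : nat) : nat :=
  lcp (drop i.-1 (take t.-1 s)) (drop t.-1 s).

(* L = max_{1 <= i < t} L_i  (0 if there is no such i) *)
Definition Lmax (s : seq A) (t : nat) : nat :=
  \max_(1 <= i < t) Lat s t i.

Definition istar (s : seq A) (t : nat) : nat :=
  head 0 [seq i <- iota 1 t.-1 | Lat s t i == Lmax s t].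

Fixpoint parse_from (s : seq A) (fuel t : nat) : seq phrase :=
  match fuel with
  | 0 => [::]
  | fuel'.+1 =>
    match drop t.-1 s with
    | [::] => [::]
    | a :: _ =>
      let L := Lmax s t in
      if L <= 1 then Char a :: parse_from s fuel' t.+1
      else Copy (istar s t) L :: parse_from s fuel' (t + L)
    end
  end.

(* Each phrase has length >= 1, so size s phrases of fuel suffice. *)
Definition lz77 (s : seq A) : seq phrase := parse_from s (size s) 1.

Inductive outsym := OChar of A | ONum of nat.

Definition encode_phrase (p : phrase) : seq outsym :=
  match p with Char a => [:: OChar a] | Copy i L => [:: ONum i; ONum L] end.

Definition encode (ps : seq phrase) : seq outsym := flatten (map encode_phrase ps).

(** The workspace is the registers plus the
      finite control; bounding each register by (n+2)^c gives O(log n) bits. *)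
Inductive instr (Q : Type) (k : nat) :=
| IInc of 'I_k & Q
| IDec of 'I_k & Q                 (* r_j := r_j - 1 (truncated) *)
| IJz of 'I_k & Q & Q
| IRead of 'I_k & (option A -> Q)
| IEmitChar of A & Q
| IEmitReg of 'I_k & Q
| IHalt.

Record program := Program {
  pstate : finType;
  pregs : nat;
  pstart : pstate;
  pdelta : pstate -> instr pstate pregs }.

Record config (P : program) := Config {
  cstate : pstate P;
  cregs : 'I_(pregs P) -> nat;
  cout : seq outsym }.

Definition read_input (s : seq A) (p : nat) : option A :=
  if p == 0 then None else nth None (map Some s) p.-1.

Definition upd (k : nat) (r : 'I_k -> nat) (j : 'I_k) (v : nat) : 'I_k -> nat :=
  fun j' => if j' == j then v else r j'.

Definition step (P : program) (s : seq A) (c : config P) : config P :=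
  let: Config q r o := c in
  match @pdelta P q with
  | IInc j q' => Config q' (upd r j (r j).+1) o
  | IDec j q' => Config q' (upd r j (r j).-1) o
  | IJz j q1 q2 => Config (if r j == 0 then q1 else q2) r o
  | IRead j f => Config (f (read_input s (r j))) r o
  | IEmitChar a q' => Config q' r (rcons o (OChar a))
  | IEmitReg j q' => Config q' r (rcons o (ONum (r j)))
  | IHalt => c
  end.

Definition init (P : program) : config P := Config (pstart P) (fun _ => 0) [::].

Definition run (P : program) (s : seq A) (t : nat) : config P :=
  iter t (step s) (init P).

Definition halted (P : program) (c : config P) : bool :=
  if @pdelta P (cstate c) is IHalt then true else false.

Definition logspace_computes (P : program) (f : seq A -> seq outsym) : Prop :=
  exists c : nat, forall s : seq A,
    (exists T, halted (run P s T) /\ cout (run P s T) = f s) /\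
    (forall t (j : 'I_(pregs P)), cregs (run P s t) j <= (size s).+2 ^ c).

End LZ77.

(* Main.v *)
Require Import Defs.
From mathcomp Require Import all_boot.
From Stdlib Require Import FunctionalExtensionality Lia.
Set Implicit Arguments. Unset Strict Implicit. Unset Printing Implicit Defensive.

Arguments IInc {A Q k}.
Arguments IDec {A Q k}.
Arguments IJz {A Q k}.
Arguments IRead {A Q k}.
Arguments IEmitChar {A Q k}.
Arguments IEmitReg {A Q k}.
Arguments IHalt {A Q k}.
Arguments OChar {A}.
Arguments ONum {A}.

Lemma updE k (r : 'I_k -> nat) j v j' : upd r j v j' = if j' == j then v else r j'.
Proof. by []. Qed.

Ltac fext := let j := fresh "j" in apply: functional_extensionality => j; rewrite /upd;
  repeat (case: eqP => [?|?]; try subst); try congruence.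

Ltac ucase := rewrite /upd; repeat (case: eqP => [?|?]; try subst); try congruence.

Lemma upd_same k (r : 'I_k -> nat) j a b : upd (upd r j a) j b = upd r j b.
Proof. by fext. Qed.
Lemma upd_id k (r : 'I_k -> nat) j v : r j = v -> upd r j v = r.
Proof. by move=> H; fext. Qed.

Section Gen.
Variable A : finType.
Variable P : program A.
Variable s : seq A.
Variable K : nat.

Definition bndr (r : 'I_(pregs P) -> nat) := forall j, r j <= K.
Definition RBx (c : config P) (Q : config P -> Prop) :=
  exists n, (forall m, m <= n -> bndr (cregs (iter m (step s) c))) /\ Q (iter n (step s) c).
Definition Run (c : config P) Q := bndr (cregs c) -> RBx c Q.

Lemma run_step c Q : (bndr (cregs c) -> bndr (cregs (step s c))) -> Run (step s c) Q -> Run c Q.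
Proof.
move=> Hb HR Hc; have [n [Hn HQ]] := HR (Hb Hc).
exists n.+1; split; last by rewrite iterSr.
case=> [|m] Hm; first by [].
rewrite iterSr; exact: Hn.
Qed.

Lemma run_done c (Q : config P -> Prop) : Q c -> Run c Q.
Proof. by move=> HQ Hc; exists 0; split=> // [[|]]. Qed.

Lemma run_trans c Q1 Q2 : Run c Q1 -> (forall c', Q1 c' -> Run c' Q2) -> Run c Q2.
Proof.
move=> H1 H2 Hc; have [n [Hn HQ]] := H1 Hc.
have [n2 [Hn2 HQ2]] := H2 _ HQ (Hn n (leqnn n)).
exists (n2 + n); split; last by rewrite iterD.
move=> m Hm; case: (leqP m n) => Hmn; first exact: Hn.
have -> : m = (m - n) + n by rewrite subnK // ltnW.
rewrite iterD; apply: Hn2; rewrite leq_subLR addnC //.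
Qed.

Lemma run_mono c (Q1 Q2 : config P -> Prop) : Run c Q1 -> (forall c, Q1 c -> Q2 c) -> Run c Q2.
Proof. move=> H1 H; apply: run_trans H1 _ => c' /H; exact: run_done. Qed.

Lemma run_inc q j q' r o Q : pdelta q = IInc j q' -> (r j).+1 <= K ->
  Run (Config q' (upd r j (r j).+1) o) Q -> Run (Config q r o) Q.
Proof.
move=> Hd Hk HR; apply: run_step; rewrite /step /= Hd //=.
by move=> Hb j' /=; rewrite updE; case: ifP => // /eqP->.
Qed.

Lemma run_dec q j q' r o Q : pdelta q = IDec j q' ->
  Run (Config q' (upd r j (r j).-1) o) Q -> Run (Config q r o) Q.
Proof.
move=> Hd HR; apply: run_step; rewrite /step /= Hd //=.
move=> Hb j' /=; rewrite /upd; case: ifP => // _; exact: leq_trans (leq_pred _) (Hb _).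
Qed.

Lemma run_jz q j q1 q2 r o Q : pdelta q = IJz j q1 q2 ->
  Run (Config (if r j == 0 then q1 else q2) r o) Q -> Run (Config q r o) Q.
Proof. by move=> Hd HR; apply: run_step; rewrite /step /= Hd //=. Qed.

Lemma run_read q j f r o Q : pdelta q = IRead j f ->
  Run (Config (f (read_input s (r j))) r o) Q -> Run (Config q r o) Q.
Proof. by move=> Hd HR; apply: run_step; rewrite /step /= Hd //=. Qed.

Lemma run_emitc q a q' r o Q : pdelta q = IEmitChar a q' ->
  Run (Config q' r (rcons o (OChar a))) Q -> Run (Config q r o) Q.
Proof. by move=> Hd HR; apply: run_step; rewrite /step /= Hd //=. Qed.

Lemma run_emitr q j q' r o Q : pdelta q = IEmitReg j q' ->
  Run (Config q' r (rcons o (ONum (r j)))) Q -> Run (Config q r o) Q.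
Proof. by move=> Hd HR; apply: run_step; rewrite /step /= Hd //=. Qed.

Lemma run_zero qa q1 qb g r o Q : pdelta qa = IJz g qb q1 -> pdelta q1 = IDec g qa ->
  Run (Config qb (upd r g 0) o) Q -> Run (Config qa r o) Q.
Proof.
move=> H1 H2; move: {2}(r g) (erefl (r g)) => v; elim: v r => [|v IH] r Hv HR.
  apply: (run_jz H1); rewrite Hv /=; by rewrite upd_id in HR.
apply: (run_jz H1); rewrite Hv /=; apply: (run_dec H2); apply: IH.
  by rewrite updE eqxx Hv.
by rewrite upd_same.
Qed.

Lemma run_move1 qa q1 q2 qb g d r o Q : pdelta qa = IJz g qb q1 -> pdelta q1 = IDec g q2 ->
  pdelta q2 = IInc d qa -> g != d -> r d + r g <= K ->
  Run (Config qb (upd (upd r g 0) d (r d + r g)) o) Q -> Run (Config qa r o) Q.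
Proof.
move=> H1 H2 H3 /eqP Hgd; move: {2}(r g) (erefl (r g)) => v; elim: v r => [|v IH] r Hv Hk HR.
  apply: (run_jz H1); rewrite Hv /=. rewrite Hv addn0 in HR.
  suff <- : (upd (upd r g 0) d (r d)) = r by []. by fext.
apply: (run_jz H1); rewrite Hv /=; apply: (run_dec H2); apply: (run_inc H3).
  rewrite /upd (introF eqP (nesym Hgd)); apply: leq_trans Hk; by rewrite Hv addnS ltnS leq_addr.
set r' := upd (upd r g _) d _.
have E1 : r' g = v by rewrite /r' /upd (introF eqP Hgd) eqxx Hv.
have E2 : r' d = (r d).+1 by rewrite /r' /upd eqxx (introF eqP (nesym Hgd)).
apply: IH => //; first by rewrite E1 E2 addSnnS -Hv.
suff -> : upd (upd r' g 0) d (r' d + r' g) = upd (upd r g 0) d (r d + r g) by [].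
rewrite E1 E2 Hv addSnnS /r'; fext.
Qed.

Lemma run_move2 qa q1 q2 q3 qb g d e r o Q : pdelta qa = IJz g qb q1 -> pdelta q1 = IDec g q2 ->
  pdelta q2 = IInc d q3 -> pdelta q3 = IInc e qa -> g != d -> g != e -> d != e ->
  r d + r g <= K -> r e + r g <= K ->
  Run (Config qb (upd (upd (upd r g 0) d (r d + r g)) e (r e + r g)) o) Q -> Run (Config qa r o) Q.
Proof.
move=> H1 H2 H3 H4 /eqP Hgd /eqP Hge /eqP Hde.
move: {2}(r g) (erefl (r g)) => v; elim: v r => [|v IH] r Hv Hk Hk' HR.
  apply: (run_jz H1); rewrite Hv /=. rewrite Hv !addn0 in HR.
  suff <- : (upd (upd (upd r g 0) d (r d)) e (r e)) = r by []. by fext.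
have Ne : forall x y : 'I_(pregs P), x <> y -> (x == y) = false := fun x y H => introF eqP H.
apply: (run_jz H1); rewrite Hv /=; apply: (run_dec H2); apply: (run_inc H3).
  rewrite /upd (Ne _ _ (nesym Hgd)); apply: leq_trans Hk; by rewrite Hv addnS ltnS leq_addr.
apply: (run_inc H4).
  rewrite /upd (Ne _ _ (nesym Hge)) (Ne _ _ (nesym Hde)).
  apply: leq_trans Hk'; by rewrite Hv addnS ltnS leq_addr.
set r' := upd (upd (upd r g _) d _) e _.
have E1 : r' g = v by rewrite /r'; ucase; rewrite Hv.
have E2 : r' d = (r d).+1 by rewrite /r'; ucase.
have E3 : r' e = (r e).+1 by rewrite /r'; ucase.
apply: IH; [by [] | by rewrite E2 E1 addSnnS -Hv | by rewrite E3 E1 addSnnS -Hv | ].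
rewrite E1 E2 E3.
suff -> : upd (upd (upd r' g 0) d ((r d).+1 + v)) e ((r e).+1 + v) =
   upd (upd (upd r g 0) d (r d + r g)) e (r e + r g) by [].
rewrite Hv !addSnnS /r'; fext.
Qed.

Lemma run_copy q0 q1 q2 q3 q4 q5 q6 q7 q8 qb g d t r o Q :
  pdelta q0 = IJz d q2 q1 -> pdelta q1 = IDec d q0 ->
  pdelta q2 = IJz g q6 q3 -> pdelta q3 = IDec g q4 -> pdelta q4 = IInc d q5 ->
  pdelta q5 = IInc t q2 ->
  pdelta q6 = IJz t qb q7 -> pdelta q7 = IDec t q8 -> pdelta q8 = IInc g q6 ->
  g != d -> g != t -> d != t -> r t = 0 ->
  Run (Config qb (upd r d (r g)) o) Q -> Run (Config q0 r o) Q.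
Proof.
move=> H0 H1 H2 H3 H4 H5 H6 H7 H8 Hgd Hgt Hdt Ht HR Hb.
have Hg := Hb g; move: Hb.
move/eqP: (Hgd) => Hgd'; move/eqP: (Hgt) => Hgt'; move/eqP: (Hdt) => Hdt'.
apply: (run_zero H0 H1) => //.
apply: (run_move2 H2 H3 H4 H5) => //; try (by ucase; rewrite ?Ht).
apply: (run_move1 H6 H7 H8); first by rewrite eq_sym.
  by ucase; rewrite Ht.
suff -> : (upd (upd (upd (upd (upd (upd r d 0) g 0) d (upd r d 0 d + upd r d 0 g)) t
     (upd r d 0 t + upd r d 0 g)) t 0) g
     (upd (upd (upd (upd r d 0) g 0) d (upd r d 0 d + upd r d 0 g)) t (upd r d 0 t + upd r d 0 g) g +
      upd (upd (upd (upd r d 0) g 0) d (upd r d 0 d + upd r d 0 g)) t (upd r d 0 t + upd r d 0 g) t))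
  = upd r d (r g) by [].
by fext; rewrite ?Ht.
Qed.

End Gen.


Lemma halted_fix (A : finType) (P : program A) s (c : config P) : halted c -> step s c = c.
Proof. case: c => q r o; rewrite /halted /step /=; by case: (pdelta q). Qed.

Lemma iter_halted (A : finType) (P : program A) s (c : config P) k : halted c -> iter k (step s) c = c.
Proof. move=> H; elim: k => //= k ->; exact: halted_fix. Qed.

Section Prog.
Variable A : finType.
Definition NS := 95.
Definition stT := ('I_NS * option A)%type.
Definition lbm (n : nat) m : stT := (inord n, m).
Definition lb (n : nat) : stT := lbm n None.
Arguments lb : simpl never.
Arguments lbm : simpl never.
Notation RT := (@Ordinal 11 0 isT).
Notation RI := (@Ordinal 11 1 isT).
Notation RD := (@Ordinal 11 2 isT).
Notation RP := (@Ordinal 11 3 isT).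
Notation RQ := (@Ordinal 11 4 isT).
Notation RE := (@Ordinal 11 5 isT).
Notation RL := (@Ordinal 11 6 isT).
Notation RC := (@Ordinal 11 7 isT).
Notation RB := (@Ordinal 11 8 isT).
Notation RS := (@Ordinal 11 9 isT).
Notation RX := (@Ordinal 11 10 isT).

Definition dn (n : nat) (m : option A) : instr A stT 11 :=
  match n with
  | 0 => IRead RT (fun x => if x is Some _ then lb 1 else lb 93)
  | 1 => IJz RB (lb 3) (lb 2)
  | 2 => IDec RB (lb 1)
  | 3 => IJz RI (lb 5) (lb 4)
  | 4 => IDec RI (lb 3)
  | 5 => IInc RI (lb 6)
  | 6 => IJz RD (lb 8) (lb 7)
  | 7 => IDec RD (lb 6)
  | 8 => IJz RT (lb 12) (lb 9)
  | 9 => IDec RT (lb 10)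
  | 10 => IInc RD (lb 11)
  | 11 => IInc RX (lb 8)
  | 12 => IJz RX (lb 15) (lb 13)
  | 13 => IDec RX (lb 14)
  | 14 => IInc RT (lb 12)
  | 15 => IDec RD (lb 16)
  | 16 => IJz RD (lb 81) (lb 17)
  | 17 => IJz RP (lb 19) (lb 18)
  | 18 => IDec RP (lb 17)
  | 19 => IJz RI (lb 23) (lb 20)
  | 20 => IDec RI (lb 21)
  | 21 => IInc RP (lb 22)
  | 22 => IInc RX (lb 19)
  | 23 => IJz RX (lb 26) (lb 24)
  | 24 => IDec RX (lb 25)
  | 25 => IInc RI (lb 23)
  | 26 => IJz RQ (lb 28) (lb 27)
  | 27 => IDec RQ (lb 26)
  | 28 => IJz RT (lb 32) (lb 29)
  | 29 => IDec RT (lb 30)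
  | 30 => IInc RQ (lb 31)
  | 31 => IInc RX (lb 28)
  | 32 => IJz RX (lb 35) (lb 33)
  | 33 => IDec RX (lb 34)
  | 34 => IInc RT (lb 32)
  | 35 => IJz RE (lb 37) (lb 36)
  | 36 => IDec RE (lb 35)
  | 37 => IJz RD (lb 41) (lb 38)
  | 38 => IDec RD (lb 39)
  | 39 => IInc RE (lb 40)
  | 40 => IInc RX (lb 37)
  | 41 => IJz RX (lb 44) (lb 42)
  | 42 => IDec RX (lb 43)
  | 43 => IInc RD (lb 41)
  | 44 => IJz RC (lb 46) (lb 45)
  | 45 => IDec RC (lb 44)
  | 46 => IJz RB (lb 50) (lb 47)
  | 47 => IDec RB (lb 48)
  | 48 => IInc RC (lb 49)
  | 49 => IInc RX (lb 46)
  | 50 => IJz RX (lb 53) (lb 51)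
  | 51 => IDec RX (lb 52)
  | 52 => IInc RB (lb 50)
  | 53 => IInc RC (lb 54)
  | 54 => IJz RL (lb 56) (lb 55)
  | 55 => IDec RL (lb 54)
  | 56 => IJz RE (lb 64) (lb 57)
  | 57 => IRead RQ (fun x => if x is Some b then lbm 58 (Some b) else lb 64)
  | 58 => if m is Some b then IRead RP (fun x => if x == Some b then lb 59 else lb 64) else IHalt
  | 59 => IInc RL (lb 60)
  | 60 => IInc RP (lb 61)
  | 61 => IInc RQ (lb 62)
  | 62 => IDec RE (lb 63)
  | 63 => IDec RC (lb 56)
  | 64 => IJz RC (lb 65) (lb 79)
  | 65 => IJz RB (lb 67) (lb 66)
  | 66 => IDec RB (lb 65)
  | 67 => IJz RL (lb 70) (lb 68)
  | 68 => IDec RL (lb 69)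
  | 69 => IInc RB (lb 67)
  | 70 => IJz RS (lb 72) (lb 71)
  | 71 => IDec RS (lb 70)
  | 72 => IJz RI (lb 76) (lb 73)
  | 73 => IDec RI (lb 74)
  | 74 => IInc RS (lb 75)
  | 75 => IInc RX (lb 72)
  | 76 => IJz RX (lb 79) (lb 77)
  | 77 => IDec RX (lb 78)
  | 78 => IInc RI (lb 76)
  | 79 => IInc RI (lb 80)
  | 80 => IDec RD (lb 16)
  | 81 => IJz RB (lb 90) (lb 82)
  | 82 => IDec RB (lb 83)
  | 83 => IJz RB (lb 90) (lb 84)
  | 84 => IInc RB (lb 85)
  | 85 => IEmitReg RS (lb 86)
  | 86 => IEmitReg RB (lb 87)
  | 87 => IJz RB (lb 0) (lb 88)
  | 88 => IDec RB (lb 89)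
  | 89 => IInc RT (lb 87)
  | 90 => IRead RT (fun x => if x is Some a then lbm 91 (Some a) else lb 93)
  | 91 => if m is Some a then IEmitChar a (lb 92) else IHalt
  | 92 => IInc RT (lb 0)
  | 94 => IInc RT (lb 0)
  | _ => IHalt
  end.

Definition delta (q : stT) := dn (val q.1) q.2.
Definition prog : program A := @Program A stT 11 (lb 94) delta.

Variable s : seq A.
Variable K : nat.
Notation Run := (@Run A prog s K).
Notation Cf := (@Config A prog).

Lemma pd n m : n < NS -> pdelta (lbm n m : pstate prog) = dn n m.
Proof. by move=> H; rewrite /= /delta /lbm /= inordK. Qed.
Lemma pd0 n : n < NS -> pdelta (lb n : pstate prog) = dn n None.
Proof. exact: pd. Qed.

Ltac cfext := let j := fresh "j" in let Hj := fresh "Hj" in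
  apply: functional_extensionality => j; case: j => [[|[|[|[|[|[|[|[|[|[|[|?]]]]]]]]]]] Hj] //; rewrite (eq_irrelevance Hj isT) /upd /=.

Ltac slia := repeat match goal with
 | H : is_true (_ <= _) |- _ => move/leP: H => H
 end; (try apply/leP); unfold addn, subn, muln in *; lia.

Lemma readE p : 0 < p -> read_input s p = ohead (drop p.-1 s).
Proof.
rewrite /read_input; case: p => // p _ /=.
elim: s p => [|x s' IH] [|p] //=.
Qed.

Lemma drop_next k x (t : seq A) : drop k s = x :: t -> drop k.+1 s = t.
Proof. by move=> H; rewrite -addn1 addnC -drop_drop H /= drop0. Qed.

Lemma lcp0r (u : seq A) : lcp u [::] = 0.
Proof. by case: u. Qed.

Lemma lcp_size (u v : seq A) : lcp u v <= size v.
Proof. elim: u v => [|a u IH] [|b v] //=; case: ifP => // _; exact: IH. Qed.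

Definition mk11 (a0 a1 a2 a3 a4 a5 a6 a7 a8 a9 a10 : nat) (j : 'I_11) : nat :=
  match nat_of_ord j with 0 => a0 | 1 => a1 | 2 => a2 | 3 => a3 | 4 => a4 | 5 => a5
  | 6 => a6 | 7 => a7 | 8 => a8 | 9 => a9 | _ => a10 end.

Lemma run_norm q r o Q :
  Run (Cf q (mk11 (r RT) (r RI) (r RD) (r RP) (r RQ) (r RE) (r RL) (r RC) (r RB) (r RS) (r RX)) o) Q ->
  Run (Cf q r o) Q.
Proof.
suff -> : mk11 (r RT) (r RI) (r RD) (r RP) (r RQ) (r RE) (r RL) (r RC) (r RB) (r RS) (r RX) = r by [].
apply: functional_extensionality => j; case: j => [[|[|[|[|[|[|[|[|[|[|[|?]]]]]]]]]]] Hj] //;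
  by rewrite /mk11 /= (eq_irrelevance Hj isT).
Qed.

Ltac snorm := apply: run_norm; rewrite /upd /=.
Ltac sv := rewrite ?updE /mk11 /=.

Definition upd5 (r : 'I_11 -> nat) m :=
  upd (upd (upd (upd (upd r RL (r RL + m)) RP (r RP + m)) RQ (r RQ + m)) RE (r RE - m)) RC (r RC - m).

Ltac sinc := eapply run_inc; [by rewrite pd0 | | ].
Ltac sdec := eapply run_dec; [by rewrite pd0 | ].
Ltac sjz := eapply run_jz; [by rewrite pd0 | ].
Ltac srd := eapply run_read; [by rewrite ?pd0 ?pd | ].

Lemma inner e : forall r o Q, r RE = e -> 0 < r RP -> 0 < r RQ ->
  let m := lcp (take e (drop (r RP).-1 s)) (drop (r RQ).-1 s) in
  r RL + m <= K -> r RP + m <= K -> r RQ + m <= K ->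
  Run (Cf (lb 64) (upd5 r m) o) Q -> Run (Cf (lb 56) r o) Q.
Proof.
have U0 r : upd5 r 0 = r by rewrite /upd5; cfext; rewrite ?addn0 ?subn0.
elim: e => [|e IH]; move=> r o Q He Hp Hq m H1 H2 H3 HR.
  have Hm0 : m = 0 by rewrite /m take0.
  sjz; rewrite He /=; by rewrite Hm0 U0 in HR.
sjz; rewrite He /=. srd. rewrite readE //.
case Dq: (drop (r RQ).-1 s) => [|b sq] /=.
  have Hm0 : m = 0 by rewrite /m Dq lcp0r.
  by rewrite Hm0 U0 in HR.
srd. rewrite readE //.
case Dp: (drop (r RP).-1 s) => [|b' sp] /=.
  have Hm0 : m = 0 by rewrite /m Dp.
  by rewrite Hm0 U0 in HR.
case: eqP => [[Eb]|Nb].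
- subst b'.
  set m' := lcp (take e sp) sq.
  have Hm : m = m'.+1 by rewrite /m Dp Dq /= eqxx.
  rewrite Hm in H1 H2 H3 HR.
  have DP : drop (r RP) s = sp by rewrite -(prednK Hp); exact: drop_next Dp.
  have DQ : drop (r RQ) s = sq by rewrite -(prednK Hq); exact: drop_next Dq.
  sinc; first slia. sinc; first (rewrite !updE /=; slia).
  sinc; first (rewrite !updE /=; slia). sdec. sdec.
  apply: IH; rewrite ?updE /= ?DP ?DQ -?/m' //; try slia.
  match goal with |- Run (Cf _ (upd5 ?r1 _) _) _ => suff -> : upd5 r1 m' = upd5 r m'.+1 by [] end.
  rewrite /upd5; cfext; slia.
- have Hm0 : m = 0 by rewrite /m Dp Dq /=; case: eqP => // E; case: Nb; rewrite E.
  by rewrite Hm0 U0 in HR.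
Qed.
Lemma lcp_sizel (u v : seq A) : lcp u v <= size u.
Proof. elim: u v => [|a u IH] [|b v] //=; case: ifP => // _; exact: IH. Qed.

Definition mx t i := \max_(1 <= j < i) Lat s t j.

Lemma mxS t i : 0 < i -> mx t i.+1 = maxn (mx t i) (Lat s t i).
Proof. by move=> Hi; rewrite /mx big_nat_recr. Qed.

Lemma mx1 t : mx t 1 = 0.
Proof. by rewrite /mx big_geq. Qed.

Lemma mx_ge t i j : 0 < j < i -> Lat s t j <= mx t i.
Proof.
elim: i => [|i IH] /andP[Hj Hji]; first by [].
have Hi : 0 < i by apply: leq_trans Hj _.
rewrite mxS // leq_max; case: (ltngtP j i) => [Hl|Hl|->]; last by rewrite leqnn orbT.
- by rewrite IH ?Hj.
- by rewrite ltnS leqNgt Hl in Hji.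
Qed.

Lemma LatE t i : 0 < i <= t -> Lat s t i = lcp (take (t - i) (drop i.-1 s)) (drop t.-1 s).
Proof.
move=> /andP[Hi Hit]; rewrite /Lat take_drop; congr (lcp (drop _ (take _ _)) _).
rewrite -(prednK Hi) in Hit *; case: t Hit => // t Hit; rewrite subSS subnK //.
Qed.

Lemma Lat_le t j : Lat s t j <= size s - t.-1.
Proof. rewrite -size_drop; exact: lcp_size. Qed.

Lemma mx_le t i B : (forall j, Lat s t j <= B) -> mx t i <= B.
Proof.
move=> H; elim: i => [|i IH]; first by rewrite /mx big_geq.
case: i IH => [|i] IH; first by rewrite mx1.
by rewrite mxS // geq_max IH H.
Qed.

Definition Sinv t i b sv := 0 < b ->
  [/\ 0 < sv, sv < i, Lat s t sv = b & forall j, 0 < j < sv -> Lat s t j < b].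

Ltac scopy := eapply run_copy;
  [by rewrite pd0 | by rewrite pd0 | by rewrite pd0 | by rewrite pd0 | by rewrite pd0 |
   by rewrite pd0 | by rewrite pd0 | by rewrite pd0 | by rewrite pd0 |
   by [] | by [] | by [] | by rewrite ?updE /= | ].
Ltac szero := eapply run_zero; [by rewrite pd0 | by rewrite pd0 | ].
Ltac smove1 := eapply run_move1; [by rewrite pd0 | by rewrite pd0 | by rewrite pd0 | by [] | | ].

Lemma cand t d : forall r o Q, (size s).+1 <= K ->
  0 < t <= size s -> r RT = t -> r RD = d -> r RI + d = t -> 0 < r RI -> r RX = 0 ->
  r RB = mx t (r RI) -> Sinv t (r RI) (r RB) (r RS) ->
  (forall r', r' RT = t -> r' RX = 0 -> r' RB = Lmax s t -> Sinv t t (Lmax s t) (r' RS) ->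
      Run (Cf (lb 81) r' o) Q) ->
  Run (Cf (lb 16) r o) Q.
Proof.
elim: d => [|d IH] r o Q HK /andP[Ht Htn] HT HD HID HI HX HB HS HC.
  sjz; rewrite HD /=. rewrite addn0 in HID; rewrite HID in HB HS.
  apply: HC => //; rewrite HB in HS; exact: HS.
sjz; rewrite HD /=.
set i := r RI in HID HI HB HS.
have Hit : i < t by rewrite -HID addnS ltnS leq_addr.
have Hti : t - i = d.+1 by rewrite -HID addKn.
have HLd : Lat s t i <= d.+1.
  rewrite LatE ?HI ?(ltnW Hit) // Hti; apply: leq_trans (lcp_sizel _ _) _.
  by rewrite size_take; case: ifP => // /negbT; rewrite -leqNgt.
have HLs : t + Lat s t i <= (size s).+1.
  rewrite LatE ?HI ?(ltnW Hit) //; apply: leq_trans (leq_add (leqnn _) (lcp_size _ _)) _.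
  rewrite size_drop; slia.
have HBK : mx t i < K.
  apply: leq_trans HK; rewrite ltnS; apply: mx_le => j; apply: leq_trans (Lat_le _ _) _.
  exact: leq_subr.
have HLat : lcp (take d.+1 (drop i.-1 s)) (drop t.-1 s) = Lat s t i.
  by rewrite LatE ?HI ?(ltnW Hit) // Hti.
scopy. scopy. scopy. scopy. sinc.
  by rewrite !updE /= HB.
szero.
apply: (inner (e := d.+1)); rewrite ?updE /= -/i ?HT ?HD ?HLat //; try slia.
sjz; rewrite /upd5 !updE /= HB.
case: (ltnP (mx t i) (Lat s t i)) => Hcmp.
- have -> : (mx t i).+1 - Lat s t i == 0 by rewrite subn_eq0.
  szero. smove1; first by rewrite !updE /=; slia.
  snorm. scopy. sinc; first by sv; rewrite -/i; slia. sdec. snorm.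
  apply: IH; sv; rewrite -/i ?HT ?HX ?HD ?Ht ?Htn //; try slia.
  + by rewrite !add0n mxS // (maxn_idPr (ltnW Hcmp)).
  + rewrite !add0n => _; split; [exact: HI | exact: ltnSn | by [] | ].
    move=> j Hj; apply: leq_ltn_trans Hcmp; apply: mx_ge; by [].
- have -> : ((mx t i).+1 - Lat s t i == 0) = false by apply/negbTE; rewrite subn_eq0 -leqNgt.
  snorm. sinc; first by sv; rewrite -/i; slia. sdec. snorm.
  apply: IH; sv; rewrite -/i ?HT ?HX ?HD ?Ht ?Htn //; try slia.
  + by rewrite HB mxS // (maxn_idPl Hcmp).
  + move=> /HS [H1 H2 H3 H4]; split => //; exact: ltnW.
Qed.

Lemma istar_eq t sv : 0 < Lmax s t -> Sinv t t (Lmax s t) sv -> istar s t = sv.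
Proof.
move=> HL /(_ HL) [H1 H2 H3 H4]; rewrite /istar.
have Ht : 0 < t by apply: leq_trans H2.
have -> : t.-1 = sv.-1 + (t - sv) by slia.
rewrite iotaD filter_cat.
have -> : [seq j <- iota 1 sv.-1 | Lat s t j == Lmax s t] = [::].
  apply/eqP; apply: negbNE; rewrite -has_filter; apply/hasPn => j; rewrite mem_iota => /andP[Hj1 Hj2].
  rewrite neq_ltn H4 // Hj1 /=; by rewrite add1n prednK in Hj2.
rewrite /= add1n prednK //.
case E: (t - sv) => [|k]; first by move/eqP: E; rewrite subn_eq0 leqNgt H2.
by rewrite /= H3 eqxx.
Qed.

Lemma Lmax_le t : Lmax s t <= size s - t.-1.
Proof. apply: mx_le => j; exact: Lat_le. Qed.

Definition Qf o fuel t := fun c : config prog => halted c /\ cout c = o ++ encode (parse_from s fuel t).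

Lemma halt93 r o : halted (Cf (lb 93) r o).
Proof. by rewrite /halted /= /delta /lb /lbm /= inordK. Qed.

Lemma mainloop n : forall t r o fuel, (size s).+1 <= K -> (size s).+1 - t <= n ->
  0 < t <= (size s).+1 -> (size s).+1 - t <= fuel -> r RT = t -> r RX = 0 ->
  Run (Cf (lb 0) r o) (Qf o fuel t).
Proof.
elim: n => [|n IH] t r o fuel HK Hn /andP[Ht Hts] Hf HT HX.
  have D : drop t.-1 s = [::].
    by apply: drop_oversize; rewrite -ltnS prednK // -subn_eq0 -leqn0.
  srd; rewrite HT readE // D /=. apply: run_done; split; first exact: halt93.
  by case: (fuel) => [|f] /=; rewrite ?D cats0.
srd; rewrite HT readE //.
case D: (drop t.-1 s) => [|a rest] /=.
  apply: run_done; split; first exact: halt93.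
  by case: (fuel) => [|f] /=; rewrite ?D cats0.
have Htn : t <= size s.
  by rewrite -(prednK Ht) ltnNge; apply/negP => /drop_oversize; rewrite D.
case: fuel Hf => [|f] Hf; first by exfalso; slia.
szero. szero. sinc; first by sv; slia. snorm. scopy. sdec. snorm.
apply: (cand (d := t.-1)); sv; rewrite ?HT ?HX ?Ht ?Htn ?mx1 //.
- by rewrite Ht Htn.
- by rewrite add1n prednK.
move=> r' HT' HX' HB' HS'.
have HLt := Lmax_le t.
have charp : Lmax s t <= 1 -> forall r2, r2 RT = t -> r2 RX = 0 -> Run (Cf (lb 90) r2 o) (Qf o f.+1 t).
  move=> HL1 r2 HT2 HX2.
  srd; rewrite HT2 readE // D /=.
  eapply run_emitc; first by rewrite pd.
  sinc; first by rewrite HT2; slia.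
  apply: run_mono; first apply: (IH t.+1 _ _ f); rewrite ?updE /= ?HT2 ?HX2 //; try slia.
  move=> c [Hh Hc]; split => //; rewrite Hc /= D HL1 /= cat_rcons //.
case EL: (Lmax s t) HLt HS' => [|[|L2]] HLt HS'.
- sjz; rewrite HB' EL /=. apply: charp => //; by rewrite EL.
- sjz; rewrite HB' EL /=. sdec. sjz; rewrite updE /= HB' EL /=. apply: charp; rewrite ?updE /= ?EL //.
- have Hist : istar s t = r' RS by apply: istar_eq; rewrite EL.
  sjz; rewrite HB' EL /=. sdec. sjz; rewrite updE /= HB' EL /=. sinc; first by sv; slia.
  eapply run_emitr; first by rewrite pd0.
  eapply run_emitr; first by rewrite pd0.
  smove1; first by sv; rewrite ?HB' ?HT'; slia.
  apply: run_mono; first apply: (IH (t + L2.+2) _ _ f); sv; rewrite ?HB' ?HT' ?HX' //; try (apply/andP; split); try slia.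
  move=> c [Hh Hc]; split => //; rewrite Hc /= D EL /= Hist -!cats1 -!catA.
by [].
Qed.

End Prog.

Theorem lemma2 (A : finType) :
  exists P : program A, logspace_computes P (fun s => encode (lz77 s)).
Proof.
exists (prog A); exists 1 => s.
have H : Run s (size s).+2 (@Config A (prog A) (lb A 94) (fun _ => 0) [::]) (Qf s [::] (size s) 1).
  eapply run_inc; first by rewrite pd0.
    by [].
  apply: (mainloop (n := (size s).+1)) => //.
  - exact: leq_subr.
  - by rewrite subn1.
have [n [Hb [Hh Hc]]] := H (fun _ => isT).
split; first by exists n; split => //; rewrite Hc.
move=> t j; rewrite expn1 /run.
case: (leqP t n) => Htn; first exact: (Hb t Htn j).
have -> : t = (t - n) + n by rewrite subnK // ltnW.
rewrite iterD iter_halted //; exact: (Hb n (leqnn n) j).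
Qed.
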